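(* Let $\theta_1,\theta_2,\dots$ be real numbers with $\theta_n\to\theta$ as $n\to\infty$, and define $\Lambda$ on $[1,\infty)$ by $\Lambda\bigl(\frac1{1-s}\bigr)=\exp\sum_{j\ge1}\frac{\theta_j-\theta}{j}s^j$ for $0\le s<1$. Let $(x_n)$, $(y_n)$ be sequences in $[1,\infty)$ with $x_n\to\infty$, $y_n\to\infty$, and suppose there is a constant $C>1$ with $\frac1C\le\frac{x_n}{y_n}\le C$ for all $n$. Then $\displaystyle\lim_{n\to\infty}\frac{\Lambda(x_n)}{\Lambda(y_n)}=1$. *)

(* Defs.v *)
From Stdlib Require Import Reals.
Open Scope R_scope.

(* The j-th term (j >= 1, encoded as j = S k) of the series
   sum_{j>=1} (theta_j - theta)/j * s^j. *)
Definition lam_term (theta : nat -> R) (thinf s : R) (k : nat) : R :=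
  (theta (S k) - thinf) / INR (S k) * s ^ (S k).

Definition is_Lambda (theta : nat -> R) (thinf : R) (Lam : R -> R) : Prop :=
  forall s L, 0 <= s < 1 ->
    infinite_sum (lam_term theta thinf s) L ->
    Lam (1 / (1 - s)) = exp L.

(* Main.v *)
Require Import Defs.
From Stdlib Require Import Reals Lra Lia Psatz Arith.
Open Scope R_scope.

Lemma fin_bound (u : nat -> R) (N : nat) :
  exists M, 0 <= M /\ forall k, (k < N)%nat -> Rabs (u k) <= M.
Proof.
  induction N as [|N [M [HM IH]]].
  - exists 0; split; [lra| intros; lia].
  - exists (Rmax M (Rabs (u N))); split.
    + apply Rle_trans with M; [lra| apply Rmax_l].
    + intros k Hk. destruct (Nat.eq_dec k N) as [->|Hne].
      * apply Rmax_r.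
      * apply Rle_trans with M; [apply IH; lia| apply Rmax_l].
Qed.

Lemma cv_bounded (u : nat -> R) (l : R) :
  Un_cv u l -> exists M, 0 <= M /\ forall n, Rabs (u n - l) <= M.
Proof.
  intros H. destruct (H 1 Rlt_0_1) as [N HN].
  destruct (fin_bound (fun k => u k - l) N) as [M [HM HB]].
  exists (Rmax M 1); split.
  - apply Rle_trans with M; [lra| apply Rmax_l].
  - intros n. destruct (le_lt_dec N n) as [Hn|Hn].
    + apply Rle_trans with 1; [|apply Rmax_r].
      left. apply HN. lia.
    + apply Rle_trans with M; [apply HB; lia| apply Rmax_l].
Qed.

Lemma cv_const (c : R) : Un_cv (fun _ => c) c.
Proof. intros eps He. exists 0%nat. intros. unfold Rdist. rewrite Rminus_diag, Rabs_R0. lra. Qed.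

Lemma series_exists (a : nat -> R) (M s : R) :
  0 <= M -> (forall k, Rabs (a k) <= M) -> 0 <= s < 1 ->
  exists L, infinite_sum (fun k => a k / INR (S k) * s ^ (S k)) L.
Proof.
  intros HM Ha Hs.
  set (T := fun k => a k / INR (S k) * s ^ (S k)).
  assert (HT : forall k, Rabs (T k) <= M * s ^ k).
  { intros k. unfold T.
    assert (H1 : 1 <= INR (S k)) by (rewrite S_INR; pose proof (pos_INR k); lra).
    assert (Hp : 0 <= s ^ k) by (apply pow_le; lra).
    assert (Hq : 0 <= / INR (S k) * s ^ S k <= s ^ k).
    { split.
      - apply Rmult_le_pos; [left; apply Rinv_0_lt_compat; lra| apply pow_le; lra].
      - change (s ^ S k) with (s * s ^ k). assert (0 < / INR (S k) <= 1).
        { split. apply Rinv_0_lt_compat; lra. rewrite <- Rinv_1. apply Rinv_le_contravar; lra. }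
        assert (0 <= s * s ^ k) by nra. nra. }
    unfold Rdiv. rewrite Rmult_assoc, Rabs_mult, (Rabs_right (/ INR (S k) * s ^ S k)) by lra.
    apply Rmult_le_compat; try apply Rabs_pos; try lra. apply Ha. }
  set (An := fun k => T k + M * s ^ k).
  set (Bn := fun k => 2 * M * s ^ k).
  assert (HB : {l | Un_cv (fun N => sum_f_R0 Bn N) l}).
  { exists (2 * M * / (1 - s)).
    assert (HG := GP_infinite s ltac:(rewrite Rabs_right; lra)).
    unfold Pser, infinite_sum in HG.
    assert (Hc := CV_mult _ _ _ _ (cv_const (2 * M)) HG).
    intros eps He. destruct (Hc eps He) as [N HN]. exists N. intros n Hn.
    specialize (HN n Hn). simpl in HN.
    replace (sum_f_R0 Bn n) with (2 * M * sum_f_R0 (fun n => 1 * s ^ n) n); [exact HN|].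
    rewrite scal_sum. apply sum_eq. intros i _. unfold Bn. ring. }
  destruct (Rseries_CV_comp An Bn) as [lA HA].
  { intros n. unfold An, Bn. specialize (HT n).
    pose proof (Rle_abs (T n)). pose proof (Rle_abs (- T n)); rewrite Rabs_Ropp in *. lra. }
  { exact HB. }
  exists (lA - M * / (1 - s)).
  assert (HG := GP_infinite s ltac:(rewrite Rabs_right; lra)).
  unfold Pser, infinite_sum in HG.
  assert (Hc := CV_mult _ _ _ _ (cv_const M) HG).
  assert (Hd := CV_minus _ _ _ _ HA Hc).
  intros eps He. destruct (Hd eps He) as [N HN]. exists N. intros n Hn.
  specialize (HN n Hn). simpl in HN.
  replace (sum_f_R0 T n) with
    (sum_f_R0 An n - M * sum_f_R0 (fun n => 1 * s ^ n) n); [exact HN|].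
  rewrite scal_sum, <- minus_sum. apply sum_eq. intros i _. unfold An, T. ring.
Qed.

Lemma pow_diff (s t m : R) (k : nat) :
  0 <= s <= m -> 0 <= t <= m ->
  Rabs (s ^ S k - t ^ S k) <= INR (S k) * Rabs (s - t) * m ^ k.
Proof.
  intros Hs Ht. induction k as [|k IH].
  - simpl. rewrite !Rmult_1_r. lra.
  - change (s ^ S (S k)) with (s * s ^ S k). change (t ^ S (S k)) with (t * t ^ S k).
    replace (s * s ^ S k - t * t ^ S k) with (s * (s ^ S k - t ^ S k) + t ^ S k * (s - t)) by ring.
    eapply Rle_trans; [apply Rabs_triang|].
    rewrite !Rabs_mult. rewrite (Rabs_right s) by lra. rewrite (Rabs_right (t ^ S k)) by (apply Rle_ge, pow_le; lra).
    assert (Htk : t ^ S k <= m ^ S k) by (apply pow_incr; lra).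
    assert (Hmk : 0 <= m ^ k) by (apply pow_le; lra).
    assert (Hd := Rabs_pos (s - t)).
    assert (Hab := Rabs_pos (s ^ S k - t ^ S k)).
    rewrite (S_INR (S k)).
    change (m ^ S k) with (m * m ^ k) in *.
    assert (s * Rabs (s ^ S k - t ^ S k) <= m * (INR (S k) * Rabs (s - t) * m ^ k)).
    { apply Rmult_le_compat; lra. }
    assert (t ^ S k * Rabs (s - t) <= m * m ^ k * Rabs (s - t)).
    { apply Rmult_le_compat_r; lra. }
    nra.
Qed.

Lemma ind_sum (N : nat) (M : R) (K : nat) :
  sum_f_R0 (fun k => if le_lt_dec N k then 0 else M) K = INR (Nat.min (S K) N) * M.
Proof.
  induction K as [|K IH].
  - simpl sum_f_R0. destruct (le_lt_dec N 0).
    + replace (Nat.min 1 N) with 0%nat by lia. simpl INR. ring.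
    + replace (Nat.min 1 N) with 1%nat by lia. simpl INR. ring.
  - rewrite tech5, IH. destruct (le_lt_dec N (S K)).
    + replace (Nat.min (S (S K)) N) with N by lia. replace (Nat.min (S K) N) with N by lia. ring.
    + replace (Nat.min (S (S K)) N) with (S (S K)) by lia. replace (Nat.min (S K) N) with (S K) by lia.
      rewrite (S_INR (S K)). ring.
Qed.

Lemma psum_bound (a : nat -> R) (M e d m : R) (N K : nat) :
  (forall k, Rabs (a k) <= M) -> (forall k, (N <= k)%nat -> Rabs (a k) <= e) ->
  0 <= e -> 0 <= d -> 0 <= m < 1 -> 0 <= M ->
  sum_f_R0 (fun k => Rabs (a k) * d * m ^ k) K <= INR N * M * d + e * d / (1 - m).
Proof.
  intros HM He He0 Hd Hm HM0.
  eapply Rle_trans.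
  { apply (sum_Rle _ (fun k => e * d * m ^ k + (if le_lt_dec N k then 0 else M * d))).
    intros k _. assert (0 <= m ^ k <= 1).
    { split. apply pow_le; lra. rewrite <- (pow1 k). apply pow_incr; lra. }
    destruct (le_lt_dec N k).
    - specialize (He k l). assert (Rabs (a k) * (d * m ^ k) <= e * (d * m ^ k)).
      { apply Rmult_le_compat_r; nra. } nra.
    - specialize (HM k). assert (Rabs (a k) * (d * m ^ k) <= M * (d * 1)).
      { apply Rmult_le_compat; try nra. apply Rabs_pos. }
      assert (0 <= e * d * m ^ k) by (apply Rmult_le_pos; nra). nra. }
  rewrite sum_plus, ind_sum.
  assert (Hg : sum_f_R0 (fun k => e * d * m ^ k) K <= e * d / (1 - m)).
  { replace (sum_f_R0 (fun k => e * d * m ^ k) K) with (sum_f_R0 (fun k => m ^ k * (e * d)) K) by (apply sum_eq; intros; ring).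
    rewrite <- scal_sum, tech3 by (intro; lra).
    assert (0 <= m ^ S K) by (apply pow_le; lra).
    unfold Rdiv. assert (0 < / (1 - m)) by (apply Rinv_0_lt_compat; lra).
    assert (0 <= e * d) by nra.
    assert (0 <= e * d * m ^ S K * / (1 - m)) by (apply Rmult_le_pos; [apply Rmult_le_pos|]; lra).
    replace (e * d * ((1 - m ^ S K) * / (1 - m))) with (e * d * / (1 - m) - e * d * m ^ S K * / (1 - m)) by ring.
    lra. }
  assert (INR (Nat.min (S K) N) <= INR N) by (apply le_INR; lia).
  assert (0 <= M * d) by nra. nra.
Qed.

Lemma lim_bound (u : nat -> R) (l B : R) :
  Un_cv u l -> (forall n, Rabs (u n) <= B) -> Rabs l <= B.
Proof.
  intros H HB. destruct (Rle_lt_dec (Rabs l) B) as [|Hl]; [assumption|].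
  destruct (H (Rabs l - B) ltac:(lra)) as [N HN]. specialize (HN N (Nat.le_refl _)).
  unfold Rdist in HN. specialize (HB N).
  pose proof (Rabs_triang_inv l (u N)). rewrite <- Rabs_Ropp in HN.
  replace (- (u N - l)) with (l - u N) in HN by ring. lra.
Qed.

Lemma ratio (x y C : R) :
  1 <= x -> 1 <= y -> 1 < C -> / C <= x / y <= C ->
  exists m, 1 - / x <= m /\ 1 - / y <= m /\ m < 1 /\
    Rabs ((1 - / x) - (1 - / y)) <= (C - 1) * (1 - m).
Proof.
  intros Hx Hy HC [H1 H2].
  assert (Hu : x * / x = 1) by (field; lra).
  assert (Hv : y * / y = 1) by (field; lra).
  assert (Hc : C * / C = 1) by (field; lra).
  assert (0 < / x) by (apply Rinv_0_lt_compat; lra).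
  assert (0 < / y) by (apply Rinv_0_lt_compat; lra).
  assert (0 < / C) by (apply Rinv_0_lt_compat; lra).
  unfold Rdiv in *.
  destruct (Rle_lt_dec x y) as [Hxy|Hxy].
  - assert (/ y <= / x) by (apply Rinv_le_contravar; lra).
    exists (1 - / y). split; [lra|]. split; [lra|]. split; [lra|].
    rewrite Rabs_left1 by lra.
    assert (/ x <= C * / y).
    { assert (/ C * (C * / x) <= x * / y * (C * / x)) by (apply Rmult_le_compat_r; nra).
      nra. }
    lra.
  - assert (/ x <= / y) by (apply Rinv_le_contravar; lra).
    exists (1 - / x). split; [lra|]. split; [lra|]. split; [lra|].
    rewrite Rabs_right by lra.
    assert (/ y <= C * / x).
    { assert (x * / y * (/ x) <= C * / x) by (apply Rmult_le_compat_r; lra).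
      nra. }
    lra.
Qed.

Theorem lemma6p2 (theta : nat -> R) (thinf : R) (Lam : R -> R)
  (x y : nat -> R) (C : R) :
  Un_cv theta thinf ->
  is_Lambda theta thinf Lam ->
  (forall n, 1 <= x n) -> (forall n, 1 <= y n) ->
  cv_infty x -> cv_infty y ->
  1 < C ->
  (forall n, / C <= x n / y n <= C) ->
  Un_cv (fun n => Lam (x n) / Lam (y n)) 1.
Proof.
  intros Hth HL Hx Hy Hcx Hcy HC Hr eps Heps.
  assert (Hexp := derivable_continuous _ derivable_exp 0).
  destruct (Hexp eps Heps) as [del [Hdel Hd]].
  simpl in Hd. unfold Rdist in Hd. rewrite exp_0 in Hd.
  destruct (cv_bounded _ _ Hth) as [M [HM0 HM]].
  set (a := fun k => theta (S k) - thinf).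
  assert (HaM : forall k, Rabs (a k) <= M) by (intros; apply HM).
  set (e := del / (2 * C)).
  assert (He : 0 < e) by (unfold e; apply Rdiv_lt_0_compat; lra).
  destruct (Hth e He) as [N0 HN0].
  assert (Hae : forall k, (N0 <= k)%nat -> Rabs (a k) <= e).
  { intros k Hk. left. apply HN0. lia. }
  set (K := INR N0 * M + 1).
  assert (HK : 0 < K) by (unfold K; pose proof (pos_INR N0); nra).
  destruct (Hcx (4 * K / del)) as [N1 HN1].
  destruct (Hcy (4 * K / del)) as [N2 HN2].
  exists (Nat.max N1 N2). intros n Hn. unfold Rdist.
  assert (Hxn : 4 * K / del < x n) by (apply HN1; lia).
  assert (Hyn : 4 * K / del < y n) by (apply HN2; lia).
  pose proof (Hx n) as Hx1. pose proof (Hy n) as Hy1.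
  set (s := 1 - / x n). set (t := 1 - / y n).
  assert (Hix : 0 < / x n <= 1) by (split; [apply Rinv_0_lt_compat; lra| rewrite <- Rinv_1; apply Rinv_le_contravar; lra]).
  assert (Hiy : 0 < / y n <= 1) by (split; [apply Rinv_0_lt_compat; lra| rewrite <- Rinv_1; apply Rinv_le_contravar; lra]).
  assert (Hs : 0 <= s < 1) by (unfold s; lra).
  assert (Ht : 0 <= t < 1) by (unfold t; lra).
  destruct (series_exists a M s HM0 HaM Hs) as [L1 HL1].
  destruct (series_exists a M t HM0 HaM Ht) as [L2 HL2].
  assert (E1 : Lam (x n) = exp L1).
  { replace (x n) with (1 / (1 - s)) by (unfold s; field; lra). apply HL; auto. }
  assert (E2 : Lam (y n) = exp L2).
  { replace (y n) with (1 / (1 - t)) by (unfold t; field; lra). apply HL; auto. }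
  rewrite E1, E2.
  replace (exp L1 / exp L2) with (exp (L1 - L2)).
  2:{ unfold Rminus. rewrite exp_plus, exp_Ropp. reflexivity. }
  destruct (Req_dec L1 L2) as [Heq|Hne].
  { rewrite Heq, Rminus_diag, exp_0, Rminus_diag, Rabs_R0. lra. }
  apply Hd. split; [split; [exact I| intro Hc; apply Hne; lra]|].
  rewrite Rminus_0_r.
  destruct (ratio (x n) (y n) C Hx1 Hy1 HC (Hr n)) as [m [Hm1 [Hm2 [Hm3 Hm4]]]].
  fold s t in Hm1, Hm2, Hm4.
  assert (Hdiff := CV_minus _ _ _ _ HL1 HL2).
  assert (Hb : Rabs (L1 - L2) <= INR N0 * M * Rabs (s - t) + e * Rabs (s - t) / (1 - m)).
  { eapply lim_bound; [exact Hdiff|]. intros k. cbv beta.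
    rewrite <- minus_sum. eapply Rle_trans; [apply Rsum_abs|].
    eapply Rle_trans; [|apply (psum_bound a M e (Rabs (s - t)) m N0 k); auto; try lra; apply Rabs_pos].
    apply sum_Rle. intros i _.
    replace (a i / INR (S i) * s ^ S i - a i / INR (S i) * t ^ S i)
      with (a i / INR (S i) * (s ^ S i - t ^ S i)) by ring.
    unfold Rdiv. rewrite !Rabs_mult.
    assert (Hi : 0 < INR (S i)) by (apply lt_0_INR; lia).
    rewrite (Rabs_right (/ INR (S i))) by (left; apply Rinv_0_lt_compat; lra).
    assert (Hp := pow_diff s t m i ltac:(lra) ltac:(lra)).
    assert (0 <= Rabs (a i) * / INR (S i)) by (apply Rmult_le_pos; [apply Rabs_pos| left; apply Rinv_0_lt_compat; lra]).
    eapply Rle_trans; [apply Rmult_le_compat_l; [exact H| exact Hp]|].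
    right. field. lra. }
  assert (Hst : Rabs (s - t) < del / (2 * K)).
  { unfold s, t. replace (1 - / x n - (1 - / y n)) with (/ y n - / x n) by ring.
    assert (/ x n < del / (4 * K)).
    { replace (del / (4 * K)) with (/ (4 * K / del)) by (field; lra).
      apply Rinv_lt_contravar; [|lra]. apply Rmult_lt_0_compat; [|lra]. apply Rdiv_lt_0_compat; lra. }
    assert (/ y n < del / (4 * K)).
    { replace (del / (4 * K)) with (/ (4 * K / del)) by (field; lra).
      apply Rinv_lt_contravar; [|lra]. apply Rmult_lt_0_compat; [|lra]. apply Rdiv_lt_0_compat; lra. }
    apply Rabs_def1; replace (del / (2 * K)) with (del / (4 * K) + del / (4 * K)) by (field; lra); lra. }
  assert (Ht1 : INR N0 * M * Rabs (s - t) < del / 2).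
  { assert (INR N0 * M * Rabs (s - t) <= K * Rabs (s - t)).
    { apply Rmult_le_compat_r; [apply Rabs_pos| unfold K; lra]. }
    assert (K * Rabs (s - t) < K * (del / (2 * K))) by (apply Rmult_lt_compat_l; lra).
    replace (K * (del / (2 * K))) with (del / 2) in H0 by (field; lra). lra. }
  assert (Ht2 : e * Rabs (s - t) / (1 - m) < del / 2).
  { assert (Hr2 : Rabs (s - t) / (1 - m) <= C - 1).
    { apply (Rmult_le_reg_r (1 - m)); [lra|]. unfold Rdiv. rewrite Rmult_assoc, Rinv_l by lra. lra. }
    unfold Rdiv in *. rewrite Rmult_assoc.
    assert (e * (Rabs (s - t) * / (1 - m)) <= e * (C - 1)) by (apply Rmult_le_compat_l; lra).
    assert (e * (C - 1) < del / 2).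
    { unfold e. unfold Rdiv. replace (del * / (2 * C) * (C - 1)) with (del / 2 - del * / (2 * C)) by (field; lra).
      assert (0 < del * / (2 * C)) by (apply Rmult_lt_0_compat; [lra| apply Rinv_0_lt_compat; lra]). lra. }
    lra. }
  lra.
Qed.
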